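(* Let $R$ be a commutative ring with unit, $\mathcal{P}$ a poset satisfying the descending chain condition, $i\in\mathcal{P}$, and $F\colon\mathcal{P}\to R\text{-mod}$ a functor which is pseudo-projective at $i$. Let $x=\oplus_{j<i}x_j\in\bigoplus_{j<i}F(j)$ satisfy $\sum_{j<i}F(j<i)(x_j)=0$. Then there is a sequence $\{x^n\}_{n\ge0}$, $x^n=\oplus_{j<i}x^n_j\in\bigoplus_{j<i}F(j)$, with $x^0=x$, such that for every $n\ge0$: $\sum_{j<i}F(j<i)(x^n_j)=0$; $x^{n+1}-x^n=\sum_{k<j,\ j\in\max\operatorname{supp}(x^n)}\big(y_{k,j}\oplus -F(k<j)(y_{k,j})\big)$ for some elements $y_{k,j}\in F(k)$ (with $y_{k,j}$ placed in the summand $F(k)$ and $-F(k<j)(y_{k,j})$ in the summand $F(j)$); $[x^{n+1}]=[x^n]$ in $\operatorname{colim}_{\mathcal{P}_{<i}}F$; and $\operatorname{supp}(x^{n+1})<\operatorname{supp}(x^n)$. In addition, there exists $N>0$ such that $x^n_j=0$ for all $j<i$ whenever $n\ge N$.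
   Context: DCC: no infinite strictly descending chains. $F(j<i)$ is the image of the arrow $j\to i$, $F(i<i)=1$. For $x=\oplus_j x_j$, $\operatorname{supp}(x)=\{j: x_j\ne0\}$; $[x]$ is the class of $x$ in the colimit. For subsets $I,J$ of $\mathcal{P}$, $J<I$ means every element of $J$ is strictly smaller than some element of $I$. $\max J$ is the set of maximal elements of $J$. $\operatorname{Im}_F(j)=\sum_{k<j}\operatorname{Im}F(k<j)$. $F$ is pseudo-projective at $i$ if for every finite $J\subset\mathcal{P}_{\le i}$ and every $\oplus_{j\in J}x_j\in\bigoplus_{j\in J}F(j)$ with $\sum_{j\in J}F(j<i)(x_j)=0$, one has $x_j\in\operatorname{Im}_F(j)$ for all $j\in\max J$. *)

(* Defs.v *)
From HB Require Import structures.
From mathcomp Require Import all_boot all_order all_algebra.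
From mathcomp Require Import finmap.
From Stdlib Require Lists.List.
Unset Printing Implicit Defensive.
Import Order.TTheory GRing.Theory.
Local Open Scope ring_scope.
Local Open Scope order_scope.


Definition dcc (d : Order.disp_t) (P : porderType d) : Prop :=
  forall f : nat -> P, ~ (forall n, f n.+1 < f n).

Record pfunctor (R : comPzRingType) (d : Order.disp_t) (P : porderType d) := PFunctor {
  obj : P -> lmodType R;
  mor : forall j k : P, j <= k -> obj j -> obj k;
  morDZ : forall j k (h : j <= k) (a : R) (u v : obj j),
      mor j k h (a *: u + v) = a *: mor j k h u + mor j k h v;
  mor_id : forall j (h : j <= j) (u : obj j), mor j j h u = u;
  mor_comp : forall j k l (hjk : j <= k) (hkl : k <= l) (hjl : j <= l) (u : obj j),
      mor j l hjl u = mor k l hkl (mor j k hjk u)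
}.

Arguments pfunctor R {d} P.
Arguments obj {R d P} p j : rename.
Arguments mor {R d P} p {j k} h v : rename.

Section Defs.
Variables (R : comPzRingType) (d : Order.disp_t) (P : porderType d) (F : pfunctor R P).

(* F(j<k) applied to v, extended by 0 when j <= k fails. *)
Definition morb (j k : P) (v : obj F j) : obj F k :=
  (match (j <= k)%O as b return ((j <= k)%O = b -> obj F k) with
   | true => fun h => mor F h v
   | false => fun _ => 0
   end) (erefl _).

Definition inj (k l : P) (y : obj F k) : obj F l :=
  match k =P l with
  | ReflectT e => eq_rect k (obj F) y l e
  | ReflectF _ => 0
  end.

Definition elem (k j : P) (y : obj F k) : forall l, obj F l :=
  fun l => inj k l y - inj j l (morb k j y).

Definition triple := {kj : P * P & obj F kj.1}.

Definition telem (t : triple) : forall l, obj F l :=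
  elem (tag t).1 (tag t).2 (tagged t).

(* Elements of the direct sum (+)_{j<i} F(j): a function j |-> x_j together
   with a finite set containing its support, all of whose elements are < i. *)
Record dsum (i : P) := DSum {
  dsupp : {fset P};
  dval : forall j, obj F j;
  dval_supp : forall j, dval j != 0 -> j \in dsupp;
  dsupp_lt : forall j, j \in dsupp -> j < i
}.
Arguments dsupp {i} _.
Arguments dval {i} _ j.

Definition dsum_eval (i : P) (x : dsum i) : obj F i :=
  \sum_(j <- dsupp x) morb j i (dval x j).

Definition supp (i : P) (x : dsum i) (j : P) : Prop := dval x j != 0.

Definition is_max (J : P -> Prop) (j : P) : Prop :=
  J j /\ forall k, J k -> ~ (j < k).

Definition set_lt (J I : P -> Prop) : Prop :=
  forall j, J j -> exists k, I k /\ j < k.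

(* [x] = [x'] in colim_{P_{<i}} F, the colimit being the quotient of
   (+)_{j<i} F(j) by the submodule generated by y (+) -F(k<j)(y), k<j<i. *)
Definition colim_eq (i : P) (x x' : dsum i) : Prop :=
  exists ts : seq triple,
    (forall t, Stdlib.Lists.List.In t ts -> (tag t).1 < (tag t).2 /\ (tag t).2 < i) /\
    forall l, dval x l - dval x' l = \sum_(t <- ts) telem t l.

Definition inImF (j : P) (v : obj F j) : Prop :=
  exists ys : seq {k : P & obj F k},
    (forall t, Stdlib.Lists.List.In t ys -> tag t < j) /\
    v = \sum_(t <- ys) morb (tag t) j (tagged t).

Definition pseudo_projective (i : P) : Prop :=
  forall (J : {fset P}) (xJ : forall j, obj F j),
    (forall j, j \in J -> j <= i) ->
    \sum_(j <- J) morb j i (xJ j) = 0 ->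
    forall j, j \in J -> (forall k, k \in J -> ~ (j < k)) -> inImF j (xJ j).

End Defs.

Arguments morb {R d P} F j k v.
Arguments inj {R d P} F k l y.
Arguments elem {R d P} F k j y l.
Arguments triple {R d P} F.
Arguments telem {R d P F} t l.
Arguments dsum {R d P} F i.
Arguments DSum {R d P F i} dsupp dval dval_supp dsupp_lt.
Arguments dsupp {R d P F i} _.
Arguments dval {R d P F i} _ j.
Arguments dsum_eval {R d P F i} x.
Arguments supp {R d P F i} x j.
Arguments is_max {d P} J j.
Arguments set_lt {d P} J I.
Arguments colim_eq {R d P F i} x x'.
Arguments inImF {R d P F j} v.
Arguments pseudo_projective {R d P} F i.
Arguments dcc {d} P.

(* Main.v *)
Require Import Defs.
From HB Require Import structures.
From mathcomp Require Import all_boot all_order all_algebra.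
From mathcomp Require Import finmap.
From Stdlib Require Lists.List.
From Stdlib Require Import Classical ClassicalEpsilon.
Import Order.TTheory GRing.Theory.
Local Open Scope ring_scope.
Local Open Scope order_scope.

Section Aux.
Variables (R : comPzRingType) (d : Order.disp_t) (P : porderType d) (F : pfunctor R P).

Lemma morD {j k : P} (h : j <= k) (u v : obj F j) :
  mor F h (u + v) = mor F h u + mor F h v.
Proof. by rewrite -[u in LHS]scale1r morDZ scale1r. Qed.

Lemma mor0 {j k : P} (h : j <= k) : mor F h 0 = 0.
Proof. by apply: (addrI (mor F h 0)); rewrite -morD !addr0. Qed.

Lemma morN {j k : P} (h : j <= k) (u : obj F j) : mor F h (- u) = - mor F h u.
Proof. by apply: (addrI (mor F h u)); rewrite -morD !subrr mor0. Qed.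

Lemma mor_irr {j k : P} (h h' : j <= k) (u : obj F j) : mor F h u = mor F h' u.
Proof. by rewrite (bool_irrelevance h h'). Qed.

Lemma morbE {j k : P} (h : j <= k) (v : obj F j) : morb F j k v = mor F h v.
Proof.
have H : forall b (e : (j <= k) = b),
  (match b as b' return ((j <= k) = b' -> obj F k) with
   | true => fun h0 => mor F h0 v
   | false => fun _ => 0 end) e = mor F h v.
  case=> e; first exact: mor_irr.
  by rewrite h in e.
exact: (H (j <= k) (erefl _)).
Qed.

Lemma morbNE {j k : P} (h : ~~ (j <= k)) (v : obj F j) : morb F j k v = 0.
Proof.
have H : forall b (e : (j <= k) = b),
  (match b as b' return ((j <= k) = b' -> obj F k) with
   | true => fun h0 => mor F h0 v
   | false => fun _ => 0 end) e = 0.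
  case=> e //.
  by rewrite e in h.
exact: (H (j <= k) (erefl _)).
Qed.

Lemma morb0 (j k : P) : morb F j k 0 = 0.
Proof. by case: (boolP (j <= k)) => h; [rewrite (morbE h) mor0 | rewrite (morbNE h)]. Qed.

Lemma morbD (j k : P) (u v : obj F j) : morb F j k (u + v) = morb F j k u + morb F j k v.
Proof. by case: (boolP (j <= k)) => h; [rewrite !(morbE h) morD | rewrite !(morbNE h) addr0]. Qed.

Lemma morbB (j k : P) (u v : obj F j) : morb F j k (u - v) = morb F j k u - morb F j k v.
Proof. by case: (boolP (j <= k)) => h; [rewrite !(morbE h) morD morN | rewrite !(morbNE h) subr0]. Qed.

Lemma morb_sum (I : Type) (s : seq I) (j k : P) (f : I -> obj F j) :
  morb F j k (\sum_(t <- s) f t) = \sum_(t <- s) morb F j k (f t).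
Proof.
elim: s => [|t s IH]; first by rewrite !big_nil morb0.
by rewrite !big_cons morbD IH.
Qed.

Lemma morb_comp (k j l : P) (y : obj F k) : k < j -> j < l ->
  morb F k l y = morb F j l (morb F k j y).
Proof.
move=> kj jl.
have kl : k <= l by apply: ltW; apply: lt_trans kj jl.
rewrite (morbE kl) (morbE (ltW jl)) (morbE (ltW kj)).
exact: mor_comp.
Qed.

Lemma injF_id (k : P) (y : obj F k) : inj F k k y = y.
Proof.
rewrite /inj; case: eqP => [e|]; last by [].
by rewrite (eq_irrelevance e (erefl k)).
Qed.

Lemma injF_ne (k l : P) (y : obj F k) : k != l -> inj F k l y = 0.
Proof. by rewrite /inj; case: eqP. Qed.

Lemma sum_inj (i : P) (s : seq P) (k : P) (y : obj F k) : uniq s -> k \in s ->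
  \sum_(l <- s) morb F l i (inj F k l y) = morb F k i y.
Proof.
move=> us ks; rewrite (bigD1_seq k) //= injF_id big1 ?addr0 // => l lk.
by rewrite injF_ne ?morb0 // eq_sym.
Qed.

Lemma In_mem_map (T : Type) (U : eqType) (f : T -> U) (s : seq T) t :
  List.In t s -> f t \in map f s.
Proof.
elim: s => //= t' s IH [->|/IH]; rewrite inE ?eqxx // => ->; by rewrite orbT.
Qed.

Lemma mem_map_In (T : Type) (U : eqType) (f : T -> U) (s : seq T) u :
  u \in map f s -> exists t, List.In t s /\ u = f t.
Proof.
elim: s => //= t' s IH; rewrite inE => /orP [/eqP ->|/IH [t [H1 H2]]].
  by exists t'; split; [left|].
by exists t; split; [right|].
Qed.

Lemma sum_neq0 (T : Type) (V : zmodType) (s : seq T) (f : T -> V) :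
  \sum_(t <- s) f t != 0 -> exists t, List.In t s /\ f t != 0.
Proof.
elim: s => [|t s IH]; first by rewrite big_nil eqxx.
rewrite big_cons; case: (eqVneq (f t) 0) => [->|ft].
  by rewrite add0r => /IH [t' [H1 H2]]; exists t'; split; [right|].
by move=> _; exists t; split; [left|].
Qed.

End Aux.
Arguments In_mem_map {T U} f {s t}.
Arguments mem_map_In {T U f s u}.
Section Term.
Variables (d : Order.disp_t) (P : porderType d).

Lemma dcc_acc : dcc P -> forall a : P, Acc (fun x y => x < y) a.
Proof.
move=> h a; apply: NNPP => na.
pose A := {b : P | ~ Acc (fun x y : P => x < y) b}.
have step : forall b : A, {c : A | sval c < sval b}.
  move=> [b nb]; apply: constructive_indefinite_description.
  apply: NNPP => H; apply nb; constructor => c cb; apply: NNPP => nc.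
  by apply: H; exists (exist _ c nc).
pose f := fix f n : A := match n with 0%N => exist _ a na | n.+1 => sval (step (f n)) end.
apply: (h (fun n => sval (f n))) => n /=.
exact: (svalP (step (f n))).
Qed.

Variable S : nat -> P -> Prop.
Hypothesis fin : forall n, exists L : seq P, forall a, S n a -> a \in L.
Hypothesis Slt : forall n, set_lt (S n.+1) (S n).
Hypothesis wf : forall a : P, Acc (fun x y => x < y) a.

Fixpoint reach (k n : nat) (a b : P) : Prop :=
  match k with
  | 0%N => b = a
  | k'.+1 => exists c, S n.+1 c /\ c < a /\ reach k' n.+1 c b
  end.

Lemma reach_last k n a b c : reach k n a c -> S (n + k).+1 b -> b < c -> reach k.+1 n a b.
Proof.
elim: k n a => [|k IH] n a /=.
  by move=> -> Sb bc; exists b; rewrite addn0 in Sb.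
move=> [c0 [Sc0 [c0a r]]] Sb bc; exists c0; split => //; split => //.
by apply: (IH n.+1 c0 r) => //; rewrite addSnnS.
Qed.

Lemma reach_prefix k n a b : reach k.+1 n a b -> exists c, reach k n a c.
Proof.
elim: k n a => [|k IH] n a; first by move=> _; exists a.
move=> [c0 [Sc0 [c0a r]]]; have [c rc] := IH _ _ r.
by exists c, c0.
Qed.

Lemma reach_mono K k n a b : (K <= k)%N -> reach k n a b -> exists c, reach K n a c.
Proof.
move=> /subnK <-; elim: (k - K)%N b => [|m IH] b; first by rewrite add0n; exists b.
by rewrite addSn => /reach_prefix [c /IH].
Qed.

Lemma back m b : S m b -> exists a, S 0%N a /\ reach m 0 a b.
Proof.
elim: m b => [|m IH] b; first by move=> Sb; exists b.
move=> Sb; have [c [Sc bc]] := Slt m b Sb; have [a [Sa r]] := IH c Sc.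
by exists a; split => //; apply: (@reach_last m 0 a b c r).
Qed.

Arguments reach_mono {K k n a b}.
Arguments reach_prefix {k n a b}.
Definition dies n a := exists K, forall b, ~ reach K n a b.

Lemma dies_mono n a K K' : (K <= K')%N -> (forall b, ~ reach K n a b) -> forall b, ~ reach K' n a b.
Proof. by move=> KK H b /(reach_mono KK) [c /H]. Qed.

Arguments dies_mono {n a K K'}.
Lemma bound n (Q : P -> Prop) (L : seq P) : (forall c, Q c -> dies n c) ->
  exists K, forall c, c \in L -> Q c -> forall b, ~ reach K n c b.
Proof.
move=> H; elim: L => [|c L [K1 HK1]]; first by exists 0%N.
case: (classic (Q c)) => Qc.
  have [K2 HK2] := H c Qc.
  exists (maxn K1 K2) => c'; rewrite inE => /orP [/eqP -> _|c'L Qc'].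
    by apply: (dies_mono _ HK2); rewrite leq_maxr.
  by apply: (dies_mono _ (HK1 c' c'L Qc')); rewrite leq_maxl.
exists K1 => c'; rewrite inE => /orP [/eqP -> //|c'L Qc']; exact: HK1.
Qed.

Lemma all_die a : forall n, dies n a.
Proof.
elim: (wf a) => {}a _ IH n.
have [L HL] := fin n.+1.
have [K HK] := bound n.+1 (fun c => S n.+1 c /\ c < a) L (fun c Hc => IH c Hc.2 n.+1).
exists K.+1 => b [c [Sc [ca r]]].
exact: (HK c (HL c Sc) (conj Sc ca) b r).
Qed.

Lemma termination : exists N, forall n b, (N <= n)%N -> ~ S n b.
Proof.
have [L HL] := fin 0%N.
have [K HK] := bound 0%N (fun c => S 0%N c) L (fun c _ => all_die c 0%N).
exists K => n b Kn /back [a [Sa r]].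
have [c rc] := reach_mono Kn r.
exact: (HK a (HL a Sa) Sa c rc).
Qed.

End Term.
Section Step.
Variables (R : comPzRingType) (d : Order.disp_t) (P : porderType d) (F : pfunctor R P).

Lemma big1_In (T : Type) (V : zmodType) (s : seq T) (f : T -> V) :
  (forall t, List.In t s -> f t = 0) -> \sum_(t <- s) f t = 0.
Proof.
elim: s => [|t s IH] H; first by rewrite big_nil.
by rewrite big_cons H /=; [rewrite add0r IH // => t' h; apply: H; right | left].
Qed.

Lemma dvalS {i : P} {x : dsum F i} {j} : dval x j != 0 -> j \in dsupp x.
Proof. exact: dval_supp. Qed.
Lemma dsuppL {i : P} {x : dsum F i} {j} : j \in dsupp x -> j < i.
Proof. exact: dsupp_lt. Qed.

Definition mk (j : P) (z : {k : P & obj F k}) : triple F :=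
  existT (fun kj : P * P => obj F kj.1) (tag z, j) (tagged z).

Lemma collect (f : forall j, obj F j) (L : seq P) : uniq L ->
  (forall j, j \in L -> inImF (f j)) ->
  exists ys : seq (triple F),
    (forall t, List.In t ys -> (tag t).1 < (tag t).2 /\ (tag t).2 \in L) /\
    forall l, l \in L -> f l =
      \sum_(t <- ys) inj F (tag t).2 l (morb F (tag t).1 (tag t).2 (tagged t)).
Proof.
elim: L => [|j L IH] /=; first by move=> _ _; exists [::].
move=> /andP [jL uL] H.
have H' : forall j', j' \in L -> inImF (f j') by move=> j' h; apply: H; rewrite inE h orbT.
have [ys [Hys1 Hys2]] := IH uL H'.
have [zs [Hzs Ezs]] := H j (mem_head _ _).
exists (map (mk j) zs ++ ys); split.
  move=> t /List.in_app_iff [/List.in_map_iff [z [<- zin]]|tin] /=.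
    by split; [apply: Hzs | apply: mem_head].
  by have [h1 h2] := Hys1 t tin; split => //; rewrite inE h2 orbT.
move=> l; rewrite inE big_cat big_map /=.
case: (eqVneq l j) => [->|lj] /= lL.
  rewrite (@big1_In _ _ ys) ?addr0; last first.
    move=> t tin; rewrite injF_ne //; apply/negP => /eqP e.
    by have [_ h] := Hys1 t tin; rewrite -e h in jL.
  rewrite Ezs; apply: eq_bigr => z _; by rewrite /mk /= injF_id.
rewrite big1 ?add0r; first exact: Hys2.
by move=> z _; rewrite injF_ne // eq_sym.
Qed.

Variables (i : P) (x : dsum F i).

Definition J : {fset P} := seq_fset tt [seq j <- dsupp x | dval x j != 0].
Definition M : {fset P} := seq_fset tt [seq j <- J | all (fun k => ~~ (j < k)) J].

Lemma memJ j : (j \in J) = (dval x j != 0).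
Proof.
rewrite seq_fsetE mem_filter.
case: (boolP (dval x j != 0)) => h //=.
by rewrite (dvalS h).
Qed.

Lemma memM j : (j \in M) = (j \in J) && all (fun k => ~~ (j < k)) J.
Proof. by rewrite seq_fsetE mem_filter andbC. Qed.

Lemma M_max {j k} : j \in M -> dval x k != 0 -> ~ (j < k).
Proof.
rewrite memM => /andP [_ /allP H] nk jk.
by have := H k; rewrite memJ nk jk => /(_ isT).
Qed.

Lemma M_nz {j} : j \in M -> dval x j != 0.
Proof. by rewrite memM memJ => /andP []. Qed.

Lemma M_lt {j} : j \in M -> j < i.
Proof. by move=> /M_nz /dvalS /dsuppL. Qed.

Section WithYs.
Variables (ys : seq (triple F)).
Hypothesis Hys1 : forall t, List.In t ys -> (tag t).1 < (tag t).2 /\ (tag t).2 \in M.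
Hypothesis Hys2 : forall l, l \in M -> dval x l =
      \sum_(t <- ys) inj F (tag t).2 l (morb F (tag t).1 (tag t).2 (tagged t)).

Definition dv (l : P) : obj F l := dval x l + \sum_(t <- ys) telem t l.

Definition S' : {fset P} := (dsupp x `|` seq_fset tt (map (fun t => (tag t).1) ys))%fset.

Lemma telemE (t : triple F) l : telem t l =
  inj F (tag t).1 l (tagged t) - inj F (tag t).2 l (morb F (tag t).1 (tag t).2 (tagged t)).
Proof. by []. Qed.

Lemma telem_nz (t : triple F) l : telem t l != 0 -> l = (tag t).1 \/ l = (tag t).2.
Proof.
rewrite telemE => nz.
case: (eqVneq (tag t).1 l) => [e|h1]; first by left; apply/esym.
case: (eqVneq (tag t).2 l) => [e|h2]; first by right; apply/esym.
by move: nz; rewrite !injF_ne // subrr eqxx.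
Qed.

Lemma dv_M l : l \in M -> dv l = 0.
Proof.
move=> lM; rewrite /dv.
under eq_bigr do rewrite telemE.
rewrite sumrB -Hys2 // (@big1_In _ _ ys) ?sub0r ?subrr //.
move=> t tin; rewrite injF_ne //; apply/negP => /eqP e.
have [h1 h2] := Hys1 t tin.
apply: (M_max lM (M_nz h2)); by rewrite -e.
Qed.

Lemma dv_nz l : dv l != 0 ->
  (dval x l != 0 /\ l \notin M) \/ (exists t, List.In t ys /\ l = (tag t).1).
Proof.
move=> nz.
have lM : l \notin M by apply/negP => /dv_M e; rewrite e eqxx in nz.
case: (boolP (dval x l != 0)) => [h|]; first by left.
rewrite negbK => /eqP e0; right.
move: nz; rewrite /dv e0 add0r => /sum_neq0 [t [tin /telem_nz [e|e]]].
  by exists t.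
by have [_ h2] := Hys1 t tin; rewrite e h2 in lM.
Qed.

Lemma dv_supp l : dv l != 0 -> l \in S'.
Proof.
move=> /dv_nz [[h _]|[t [tin ->]]]; rewrite in_fsetU.
  by rewrite (dvalS h).
by rewrite seq_fsetE (In_mem_map (fun t : triple F => (tag t).1) tin) orbT.
Qed.

Lemma S'_lt l : l \in S' -> l < i.
Proof.
rewrite in_fsetU seq_fsetE => /orP [/dsuppL //|/mem_map_In [t [tin ->]]].
have [h1 h2] := Hys1 t tin.
exact: lt_trans h1 (M_lt h2).
Qed.

Definition x' : dsum F i := DSum S' dv dv_supp S'_lt.

Lemma eval_x' : dsum_eval x = 0 -> dsum_eval x' = 0.
Proof.
move=> ev; rewrite /dsum_eval /= /dv.
under eq_bigr do rewrite morbD morb_sum.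
rewrite big_split /=.
rewrite -(big_fset_incl _ (A := dsupp x)); last first.
- move=> l _ nl.
  have /eqP -> : dval x l == 0 by apply: contraNT nl => h; exact: dvalS h.
  by rewrite morb0.
- by apply/fsubsetP => l h; rewrite in_fsetU h.
rewrite /dsum_eval in ev; rewrite ev add0r exchange_big /=.
apply: big1_In => t tin.
have [h1 h2] := Hys1 t tin.
under eq_bigr do rewrite telemE morbB.
rewrite sumrB !sum_inj ?fset_uniq //.
- by rewrite -morb_comp ?subrr // (M_lt h2).
- by rewrite in_fsetU (dvalS (M_nz h2)).
- by rewrite in_fsetU seq_fsetE (In_mem_map (fun t : triple F => (tag t).1) tin) orbT.
Qed.

End WithYs.

Definition Props (x1 x2 : dsum F i) : Prop :=
  dsum_eval x2 = 0 /\
  (exists ys : seq (triple F),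
      (forall t, List.In t ys -> (tag t).1 < (tag t).2 /\ is_max (supp x1) (tag t).2) /\
      (forall l, dval x2 l - dval x1 l = \sum_(t <- ys) telem t l)) /\
  colim_eq x2 x1 /\ set_lt (supp x2) (supp x1).

Lemma step : pseudo_projective F i -> dsum_eval x = 0 -> exists x2, Props x x2.
Proof.
move=> pp ev.
have Hpp : forall j, j \in M -> inImF (dval x j).
  move=> j jM; have := jM; rewrite memM => /andP [jJ /allP Hall].
  apply: (pp J (dval x)) => //.
  - by move=> k; rewrite memJ => /dvalS /dsuppL /ltW.
  - rewrite (big_fset_incl _ (A := J) (B := dsupp x)) //.
      by apply/fsubsetP => k; rewrite memJ => /dvalS.
    move=> k _; rewrite memJ negbK => /eqP ->; exact: morb0.
  - by move=> k kJ; have := Hall k kJ => /negP.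
have [ys [Hys1 Hys2]] := collect (dval x) M (fset_uniq M) Hpp.
exists (x' ys Hys1 Hys2); split; first exact: eval_x'.
have Hdiff : forall l, dval (x' ys Hys1 Hys2) l - dval x l = \sum_(t <- ys) telem t l.
  by move=> l; rewrite /= /dv addrC addKr.
split.
  exists ys; split => // t tin; have [h1 h2] := Hys1 t tin; split => //.
  split; first exact: M_nz h2.
  by move=> k; apply: M_max h2.
split.
  exists ys; split => // t tin; have [h1 h2] := Hys1 t tin; split => //.
  exact: M_lt h2.
move=> l; rewrite /supp /= => /(dv_nz ys Hys1 Hys2) [[h lM]|[t [tin ->]]].
  move: lM; rewrite memM memJ h /= => /allPn [k kJ /negPn lk].
  by exists k; split => //; rewrite /supp -memJ.
have [h1 h2] := Hys1 t tin.
by exists (tag t).2; split => //; apply: M_nz h2.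
Qed.

End Step.

Theorem lemma6p1 (R : comPzRingType) (d : Order.disp_t) (P : porderType d)
    (F : pfunctor R P) (i : P) (x : dsum F i) :
  dcc P -> pseudo_projective F i -> dsum_eval x = 0 ->
  exists xs : nat -> dsum F i,
    (forall j, dval (xs 0%N) j = dval x j) /\
    (forall n : nat,
        dsum_eval (xs n) = 0 /\
        (exists ys : seq (triple F),
            (forall t, Stdlib.Lists.List.In t ys ->
               (tag t).1 < (tag t).2 /\ is_max (supp (xs n)) (tag t).2) /\
            (forall l, dval (xs n.+1) l - dval (xs n) l
                       = \sum_(t <- ys) telem t l)) /\
        colim_eq (xs n.+1) (xs n) /\
        set_lt (supp (xs n.+1)) (supp (xs n))) /\
    (exists N : nat, (0 < N)%N /\
       forall (n : nat) (j : P), (N <= n)%N -> j < i -> dval (xs n) j = 0).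
Proof.
move=> hdcc pp ev.
have ex : forall y : dsum F i, exists y2 : dsum F i,
    dsum_eval y = 0 -> @Props R d P F i y y2.
  move=> y; case: (eqVneq (dsum_eval y) 0) => [e|ne].
    by have [y2 H] := @step R d P F i y pp e; exists y2.
  by exists y => e; rewrite e eqxx in ne.
pose g := fun y => proj1_sig (constructive_indefinite_description _ (ex y)).
have Hg : forall y, dsum_eval y = 0 -> @Props R d P F i y (g y) :=
  fun y => proj2_sig (constructive_indefinite_description _ (ex y)).
pose xs := fun n => iter n g x.
have Hev : forall n, dsum_eval (xs n) = 0.
  by elim=> [|n IH] //=; have [] := Hg _ IH.
have HP : forall n, @Props R d P F i (xs n) (xs n.+1) := fun n => Hg _ (Hev n).
exists xs; split; first by [].
split.
  by move=> n; split; [exact: Hev | exact: (HP n).2].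
have fin : forall n, exists L : seq P, forall a, supp (xs n) a -> a \in L.
  by move=> n; exists (dsupp (xs n)) => a; exact: dval_supp.
have lt : forall n, set_lt (supp (xs n.+1)) (supp (xs n)).
  by move=> n; have [_ [_ [_ h]]] := HP n.
have [N HN] := @termination _ P (fun n j => supp (xs n) j) fin lt (@dcc_acc _ P hdcc).
exists N.+1; split => // n j Nn _.
apply/eqP; apply: contraT => nz; case: (HN n j (ltnW Nn) nz).
Qed.
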